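(* Let $1\le k\le n$ and let $a_{i,j}\in\mathbb C$ for $0\le i<j\le k$. If $$\sum_{0\le i<j\le k}a_{i,j}\,\mathrm{Tr}_{\{k+1,\dots,n\}}\big(|D_n^i\rangle\langle D_n^j|\big)=0,$$ then $a_{i,j}=0$ for all $0\le i<j\le k$.
   Context: Dicke states: $|D_n^i\rangle=\binom{n}{i}^{-1/2}\sum_{s\in\{0,1\}^n,\ \sum_js_j=i}|s_1\rangle\otimes\cdots\otimes|s_n\rangle$ in $(\mathbb C^2)^{\otimes n}$; $\mathrm{Tr}_{\{k+1,\dots,n\}}$ is the partial trace over qubits $k+1,\dots,n$ (for $k=n$ it is the identity map). *)

(* Defs.v *)
From HB Require Import structures.
From mathcomp Require Import all_boot all_order all_algebra.
From mathcomp Require Import reals complex.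
Set Implicit Arguments. Unset Strict Implicit. Unset Printing Implicit Defensive.
Import Order.TTheory GRing.Theory Num.Theory.
Local Open Scope ring_scope.

(* Computational basis of (C^2)^{\otimes n}: bit strings s = (s_1,...,s_n),
   qubit number q (1-based) is index q-1 : 'I_n. *)
Definition bits (n : nat) := {ffun 'I_n -> bool}.

Definition hweight (n : nat) (s : bits n) : nat := (\sum_(j < n) (s j : nat))%N.

Definition dicke (R : realType) (n i : nat) (s : bits n) : R[i] :=
  if hweight s == i then (((Num.sqrt (('C(n, i))%:R : R))^-1)%:C)%C else 0.

(* Operators on (C^2)^{\otimes n}, given by their matrix entries <s|X|t>. *)
Definition op (R : realType) (n : nat) := bits n -> bits n -> R[i].

Definition dicke_outer (R : realType) (n i j : nat) : op R n :=
  fun s t => @dicke R n i s * Num.conj (@dicke R n j t).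

(* Partial trace over qubits k+1,...,n (i.e. indices k..n-1), keeping the
   first k qubits:  <u|Tr X|v> = sum_w <u w| X |v w>. For k = n this is
   the identity map. *)
Definition ptrace (R : realType) (n k : nat) (hk : (k <= n)%N) (X : op R n)
  : op R k :=
  fun u v =>
    \sum_(s : bits n) \sum_(t : bits n |
        [forall j : 'I_k, (s (widen_ord hk j) == u j) && (t (widen_ord hk j) == v j)]
        && [forall q : 'I_n, (k <= q)%N ==> (s q == t q)])
      X s t.

(* Main.v *)
Require Import Defs.
From HB Require Import structures.
From mathcomp Require Import all_boot all_order all_algebra.
From mathcomp Require Import reals complex.
From mathcomp Require Import zify.
Import Order.TTheory GRing.Theory Num.Theory.
Local Open Scope ring_scope.
Set Implicit Arguments. Unset Strict Implicit.

Definition pref (n m : nat) : bits n := [ffun q : 'I_n => (q < m)%N].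
Definition rest (n k : nat) (s : bits n) : nat :=
  (\sum_(q < n | ~~ (q < k)%N) (s q : nat))%N.

Lemma sum_lt (n i : nat) : (\sum_(q < n) ((q < i)%N : nat))%N = minn i n.
Proof.
elim: n => [|n IH]; first by rewrite big_ord0; lia.
rewrite big_ord_recr /= IH.
case: (ltnP n i) => h /=; lia.
Qed.

Lemma hw_split (n k : nat) (hk : (k <= n)%N) (i : nat) (hi : (i <= k)%N)
  (s : bits n) :
  (forall q : 'I_k, s (widen_ord hk q) = (q < i)%N) ->
  hweight s = (i + rest k s)%N.
Proof.
move=> H; rewrite /hweight (bigID (fun q : 'I_n => (q < k)%N)) /= /rest.
congr (_ + _)%N.
rewrite (eq_bigr (fun q : 'I_n => ((q < i)%N : nat))); last first.
  move=> q qk; have := H (Ordinal qk).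
  by rewrite (_ : widen_ord hk (Ordinal qk) = q) //; [move=> -> | apply: val_inj].
rewrite big_mkcond /=.
rewrite (eq_bigr (fun q : 'I_n => ((q < i)%N : nat))); last first.
  by move=> q _; case: ifP => // /negbT; rewrite -leqNgt => h; lia.
rewrite sum_lt; lia.
Qed.

Lemma hw_pref (n i : nat) : (i <= n)%N -> hweight (pref n i) = i.
Proof.
move=> h; rewrite /hweight.
rewrite (eq_bigr (fun q : 'I_n => ((q < i)%N : nat))); last by move=> q _; rewrite ffunE.
rewrite sum_lt; lia.
Qed.

Lemma rest_eq (n k : nat) (s t : bits n) :
  (forall q : 'I_n, (k <= q)%N -> s q = t q) -> rest k s = rest k t.
Proof.
move=> H; apply: eq_bigr => q; rewrite -leqNgt => h; by rewrite H.
Qed.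

Lemma hw_eq_pref (n k : nat) (hk : (k <= n)%N) (i : nat) (hi : (i <= k)%N)
  (s : bits n) :
  (forall q : 'I_k, s (widen_ord hk q) = (q < i)%N) ->
  hweight s = i -> s = pref n i.
Proof.
move=> H hw; have := hw_split hi H; rewrite hw => e.
have r0 : rest k s = 0%N by lia.
move: r0 => /eqP; rewrite /rest sum_nat_eq0 => /forallP r0.
apply/ffunP => q; rewrite ffunE.
case: (ltnP q k) => qk.
  have := H (Ordinal qk).
  by rewrite (_ : widen_ord hk (Ordinal qk) = q) //; apply: val_inj.
have := r0 q; rewrite -leqNgt qk /= => /eqP.
case: (s q) => // _; symmetry; apply/negbTE; rewrite -leqNgt; lia.
Qed.

Lemma cond_pref (n k : nat) (hk : (k <= n)%N) (i j : nat) (s t : bits n) :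
  [forall q : 'I_k, (s (widen_ord hk q) == pref k i q) && (t (widen_ord hk q) == pref k j q)]
  && [forall q : 'I_n, (k <= q)%N ==> (s q == t q)] ->
  [/\ (forall q : 'I_k, s (widen_ord hk q) = (q < i)%N),
      (forall q : 'I_k, t (widen_ord hk q) = (q < j)%N) &
      (forall q : 'I_n, (k <= q)%N -> s q = t q)].
Proof.
case/andP => /forallP H1 /forallP H2; split.
- by move=> q; have /andP [/eqP -> _] := H1 q; rewrite ffunE.
- by move=> q; have /andP [_ /eqP ->] := H1 q; rewrite ffunE.
- by move=> q h; have /implyP /(_ h) /eqP := H2 q.
Qed.

Lemma ptrace_nz (R : realType) (n k : nat) (hk : (k <= n)%N) (i j i' j' : nat)
  (hi : (i <= k)%N) (hj : (j <= k)%N) :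
  @ptrace R n k hk (@dicke_outer R n i' j') (pref k i) (pref k j) != 0 ->
  exists r, i' = (i + r)%N /\ j' = (j + r)%N.
Proof.
move=> Hnz.
case E: ((i <= i')%N && (j' == j + (i' - i))%N).
  by exists (i' - i)%N; move/andP: E => [h /eqP]; lia.
exfalso; move/eqP: Hnz; apply.
apply: big1 => s _; apply: big1 => t /cond_pref [Hs Ht Hst].
rewrite /dicke_outer /dicke.
case: eqP => hs; last by rewrite mul0r.
case: eqP => ht; last by apply/eqP; rewrite mulf_eq0 conjC_eq0; apply/orP; right; exact: eqxx.
have := hw_split hi Hs; have := hw_split hj Ht.
rewrite (rest_eq Hst) => e1 e2.
move: E; lia.
Qed.

Lemma coef_nz (R : realType) (n i : nat) : (i <= n)%N ->
  ((((Num.sqrt (('C(n, i))%:R : R))^-1)%:C)%C : R[i]) != 0.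
Proof.
move=> h; apply/negP => /eqP e.
have : (Num.sqrt (('C(n, i))%:R : R))^-1 = 0 by case: e.
move/eqP; by rewrite invr_eq0 sqrtr_eq0 leNgt ltr0n bin_gt0 h.
Qed.

Lemma ptrace_diag (R : realType) (n k : nat) (hk : (k <= n)%N) (i j : nat)
  (hi : (i <= k)%N) (hj : (j <= k)%N) :
  @ptrace R n k hk (@dicke_outer R n i j) (pref k i) (pref k j) != 0.
Proof.
rewrite /ptrace (bigD1 (pref n i)) //= (bigD1 (pref n j)) /=; last first.
  apply/andP; split.
    by apply/forallP => q; rewrite !ffunE /= !eqxx.
  apply/forallP => q; apply/implyP => kq; rewrite !ffunE.
  by rewrite !ltnNge (leq_trans hi kq) (leq_trans hj kq).
rewrite big1; last first.
  move=> t /andP [/cond_pref [Hs Ht Hst] tne].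
  rewrite /dicke_outer /dicke.
  case: (hweight t =P j) => ht; last by apply/eqP; rewrite mulf_eq0 conjC_eq0; apply/orP; right; exact: eqxx.
  by move: tne; rewrite (hw_eq_pref hj Ht ht) eqxx.
rewrite addr0 big1; last first.
  move=> s sne; apply: big1 => t /cond_pref [Hs Ht Hst].
  rewrite /dicke_outer /dicke.
  case: eqP => hs; last by rewrite mul0r.
  by move: sne; rewrite (hw_eq_pref hi Hs hs) eqxx.
have hin : (i <= n)%N by lia.
have hjn : (j <= n)%N by lia.
rewrite addr0 /dicke_outer /dicke (hw_pref hin) (hw_pref hjn) !eqxx.
apply: mulf_neq0; first exact: coef_nz.
rewrite conjC_eq0; exact: coef_nz.
Qed.

Unset Implicit Arguments. Set Strict Implicit.

Theorem mainTheorem17 (R : realType) (n k : nat) (hk1 : (1 <= k)%N)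
  (hk : (k <= n)%N) (a : nat -> nat -> R[i]) :
  (forall u v : bits k,
     \sum_(i < k.+1) \sum_(j < k.+1 | (i < j)%N)
        a i j * @ptrace R n k hk (@dicke_outer R n i j) u v = 0) ->
  forall i j : nat, (i < j)%N -> (j <= k)%N -> a i j = 0.
Proof.
move=> H.
suff S : forall d i j, (k - j < d)%N -> (i < j)%N -> (j <= k)%N -> a i j = 0.
  by move=> i j; apply: (S (k - j).+1).
elim=> [//|d IH] i j hd hij hjk.
have hik : (i <= k)%N by lia.
have Z : forall i' j' : nat, (i' < j')%N -> (j' <= k)%N ->
    (i' != i) || (j' != j) ->
    a i' j' * @ptrace R n k hk (@dicke_outer R n i' j') (pref k i) (pref k j) = 0.
  move=> i' j' h1 h2 hne.
  case: (eqVneq (@ptrace R n k hk (@dicke_outer R n i' j') (pref k i) (pref k j)) 0)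
    => [-> | /(ptrace_nz hik hjk) [r [e1 e2]]]; first by rewrite mulr0.
  rewrite (IH i' j') ?mul0r //; move: hne; lia.
have := H (pref k i) (pref k j).
have hord : (@inord k i < @inord k j)%N by rewrite !inordK; lia.
rewrite (bigD1 (inord i)) // (bigD1 (inord j) hord) /=.
rewrite big1; last first.
  move=> j' /andP [hij' hne]; rewrite inordK in hij' *; last by lia.
  apply: Z => //; first by rewrite -ltnS ltn_ord.
  apply/orP; right; apply: contra hne => /eqP e; apply/eqP/val_inj.
  by rewrite /= inordK ?e //; lia.
rewrite addr0 big1; last first.
  move=> i' hne; apply: big1 => j' hij'; apply: Z => //; first by rewrite -ltnS ltn_ord.
  apply/orP; left; apply: contra hne => /eqP e; apply/eqP/val_inj.
  by rewrite /= inordK ?e //; lia.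
rewrite addr0 !inordK; try lia.
move/eqP; rewrite mulf_eq0 (negbTE (@ptrace_diag R n k hk i j hik hjk)) orbF.
by move/eqP.
Qed.
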